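(* Let $R$ be an associative ring with identity and involution $*$, and let $a\in R^{\#}\cap R^{\dagger}$. Then $a\in R^{SEP}$ if and only if $(a(a^{\#})^*a^{\dagger})^k=(a^{\dagger}a^2)^k$ for both $k=2$ and $k=3$.
   Context: An involution on $R$ is a map $x\mapsto x^*$ with $(x^* )^*=x$, $(x+y)^*=x^*+y^*$, $(xy)^*=y^*x^*$. An element $a$ is Moore–Penrose invertible if there is $b$ with $aba=a$, $bab=b$, $(ab)^*=ab$, $(ba)^*=ba$; such $b$ is unique, denoted $a^{\dagger}$, and $R^{\dagger}$ is the set of such $a$. An element $a$ is group invertible if there is $b$ with $aba=a$, $bab=b$, $ab=ba$; such $b$ is unique, denoted $a^{\#}$, and $R^{\#}$ is the set of such $a$. For $a\in R^{\#}\cap R^{\dagger}$, $a$ is SEP if $a^*=a^{\dagger}=a^{\#}$; $R^{SEP}$ denotes the set of SEP elements. *)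

(* Defs.v *)
From mathcomp Require Import all_boot all_algebra.
Set Implicit Arguments. Unset Strict Implicit. Unset Printing Implicit Defensive.
Import GRing.Theory.
Local Open Scope ring_scope.

Definition involution (R : pzRingType) (star : R -> R) : Prop :=
  [/\ forall x, star (star x) = x,
      forall x y, star (x + y) = star x + star y &
      forall x y, star (x * y) = star y * star x].

Definition is_mp_inverse (R : pzRingType) (star : R -> R) (a b : R) : Prop :=
  [/\ a * b * a = a, b * a * b = b, star (a * b) = a * b & star (b * a) = b * a].

Definition is_group_inverse (R : pzRingType) (a b : R) : Prop :=
  [/\ a * b * a = a, b * a * b = b & a * b = b * a].

Definition mp_invertible (R : pzRingType) (star : R -> R) (a : R) : Prop :=
  exists b, is_mp_inverse star a b.

Definition group_invertible (R : pzRingType) (a : R) : Prop :=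
  exists b, is_group_inverse a b.

(* a is SEP: a in R^# ∩ R^† and a^* = a^† = a^# *)
Definition SEP (R : pzRingType) (star : R -> R) (a : R) : Prop :=
  exists b, [/\ is_mp_inverse star a b, is_group_inverse a b & star a = b].

(* Main.v *)
Require Import Defs.
From mathcomp Require Import all_boot all_algebra.
Set Implicit Arguments. Unset Strict Implicit. Unset Printing Implicit Defensive.
Import GRing.Theory.
Local Open Scope ring_scope.

Section S.
Variable (R : pzRingType) (s : R -> R) (a d g : R).
Hypothesis ss : forall x, s (s x) = x.
Hypothesis sM : forall x y, s (x * y) = s y * s x.
Hypothesis H1 : a * (d * a) = a.
Hypothesis H2 : d * (a * d) = d.
Hypothesis H3 : s (a * d) = a * d.
Hypothesis H4 : s (d * a) = d * a.
Hypothesis G1 : a * (g * a) = a.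
Hypothesis G2 : g * (a * g) = g.
Hypothesis G3 : a * g = g * a.


Lemma gga : g * (g * a) = g. Proof. by rewrite -G3 G2. Qed.
Lemma gaa : g * (a * a) = a. Proof. by rewrite mulrA -G3 -mulrA G1. Qed.
Lemma aag : a * (a * g) = a. Proof. by rewrite G3 G1. Qed.
Lemma sa1 : d * (a * s a) = s a.
Proof. by rewrite -[in RHS]H1 sM H4 mulrA. Qed.
Lemma F1 : d * (a * s g) = s g.
Proof.
have E : s g = s a * (s g * s g) by rewrite -[in LHS]gga !sM mulrA.
by rewrite [in LHS]E (mulrA a) (mulrA d) sa1 -E.
Qed.
Lemma F2 : s a * (s g * s g) = s g.
Proof.
have E1 : s a * s g = s g * s a by rewrite -!sM G3.
have E2 : s g * (s a * s g) = s g by rewrite mulrA -!sM G2.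
by rewrite mulrA E1 -mulrA E2.
Qed.
Local Notation S := (s g).
Lemma F1x x : d * (a * (S * x)) = S * x.
Proof. by rewrite (mulrA a) (mulrA d) F1. Qed.
Lemma F2x x : s a * (S * (S * x)) = S * x.
Proof. by rewrite (mulrA S) (mulrA (s a)) F2. Qed.
Lemma H1x x : a * (d * (a * x)) = a * x.
Proof. by rewrite (mulrA d) (mulrA a) H1. Qed.

Lemma back :
  (a * (S * d)) * (a * (S * d)) = (d * (a * a)) * (d * (a * a)) ->
  (a * (S * d)) * ((a * (S * d)) * (a * (S * d))) =
  (d * (a * a)) * ((d * (a * a)) * (d * (a * a))) ->
  S = a.
Proof.
have [u Hu] : {u | u = a * (S * d)} by eexists.
have [v Hv] : {v | v = d * (a * a)} by eexists.
rewrite -Hu -Hv => h2 h3.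
have [Z HZ] : {Z | Z = a * (s a * d)} by eexists.
have hZ : Z * (u * u) = u.
  by rewrite HZ Hu -!mulrA !F1x F2x.
have hv : v = v * v * g.
  by rewrite Hv -!mulrA aag H1.
have hv' : v * (v * g) = v by rewrite mulrA -hv.
have hv2 : v * v = v * (v * v) * g by rewrite -!mulrA hv'.
have uv : u = v.
  by rewrite -hZ h2 hv2 -h3 !mulrA -(mulrA Z) hZ h2 -hv.
have au : a = u.
  have e1 : a * a = a * u by rewrite uv Hv H1x.
  by rewrite -gaa e1 Hu !mulrA -(mulrA g) gaa.
have pq : a * d * (d * a) = d * a.
  have e : a * (d * v) = v by rewrite -uv Hu H1x.
  have := congr1 (fun w => w * g) e.
  by rewrite Hv -!mulrA !aag mulrA.
have qp : d * a * (a * d) = a * d.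
  by rewrite -!mulrA (mulrA a a d) (mulrA d) -Hv -uv -au.
have pEq : a * d = d * a.
  by rewrite -[LHS]H3 -qp sM H3 H4 pq.
have xa : g * a = d * a.
  by rewrite -G3 -[in LHS]H1 mulrA pEq -!mulrA aag.
have dg : d = g.
  by rewrite -[RHS]G2 mulrA xa -mulrA G3 xa -pEq H2.
have ga : g * a = S * d.
  by rewrite {1}au Hu mulrA mulrA xa -(mulrA d a S) F1.
by rewrite -[RHS]gaa mulrA ga -mulrA -pEq -H3 -sM dg G3 -mulrA G2.
Qed.
End S.

Lemma gi_uniq (R : pzRingType) (a x y : R) :
  a * (x * a) = a -> x * (a * x) = x -> a * x = x * a ->
  a * (y * a) = a -> y * (a * y) = y -> a * y = y * a -> x = y.
Proof.
move=> X1 X2 X3 Y1 Y2 Y3.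
have xa : x * a = y * a.
  by rewrite -X3 -{1}Y1 mulrA Y3 -!mulrA X3 X1.
by rewrite -X2 mulrA xa -mulrA X3 xa -Y3 Y2.
Qed.

Theorem theorem4p1 (R : pzRingType) (star : R -> R) (a adag ash : R) :
  involution star ->
  is_mp_inverse star a adag ->
  is_group_inverse a ash ->
  SEP star a <->
  ((a * star ash * adag) ^+ 2 = (adag * a ^+ 2) ^+ 2 /\
   (a * star ash * adag) ^+ 3 = (adag * a ^+ 2) ^+ 3).
Proof.
move=> [ss sD sM] [H1 H2 H3 H4] [G1 G2 G3].
rewrite -mulrA in H1; rewrite -mulrA in H2; rewrite -mulrA in G1; rewrite -mulrA in G2.
split.
- move=> [b [[B1 B2 B3 B4] [C1 C2 C3] sab]].
  rewrite -mulrA in C1; rewrite -mulrA in C2.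
  have gb : ash = b by apply: (gi_uniq G1 G2 G3 C1 C2 C3).
  have sg : star ash = a by rewrite gb -sab ss.
  have se : star (a * ash) = a * ash by rewrite sM sg gb -sab.
  have pe : a * adag = a * ash.
    have ep : a * ash * (a * adag) = a * adag by rewrite mulrA -(mulrA a ash a) G1.
    have p_e : a * adag * (a * ash) = a * ash by rewrite mulrA -(mulrA a adag a) H1.
    by rewrite -H3 -ep sM H3 se p_e.
  have qe : adag * a = ash * a.
    have qe1 : adag * a * (ash * a) = adag * a by rewrite -!mulrA G1.
    have eq1 : ash * a * (adag * a) = ash * a by rewrite -!mulrA H1.
    by rewrite -H4 -qe1 sM H4 -G3 se G3 eq1.
  have U : a * star ash * adag = a by rewrite sg -mulrA pe G3 G1.
  have V : adag * a ^+ 2 = a by rewrite expr2 mulrA qe -G3 -mulrA G1.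
  by rewrite U V.
- rewrite !exprS !expr0 !mulr1 => [[h2 h3]].
  have Sa : star ash = a.
    apply: (@back R star a adag ash) => //.
    + by move: h2; rewrite !mulrA.
    + by move: h3; rewrite !mulrA.
  have sa : star a = ash by rewrite -Sa ss.
  exists ash; split; last by [].
  + by split; rewrite ?sM ?Sa ?sa // -mulrA ?G1 ?G2.
  + by split; rewrite // -mulrA ?G1 ?G2.
Qed.
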